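(* For all integers $i,j$ the following hold (whenever every triple $(m',n',k')$ appearing as a subscript satisfies $m',n'\ge0$ and $0\le k'\le\min(m',n')$, as guaranteed by the stated hypotheses): (1) If $1\le k\le m-1$ and $k\le n$: $c_{m,n,k}(i,j)=c_{m-1,n,k}(i,j)+c_{m-1,n-1,k-1}(i,j-1)$. (2) If $1\le k\le m$ and $k\le n-1$: $c_{m,n,k}(i,j)=c_{m,n-1,k}(i,j)-c_{m-1,n-1,k-1}(i-1,j)$. (3) If $0\le k\le\min(m-1,n-1)$ and $i+j>k$: $c_{m,n,k}(i,j)=c_{m-1,n,k}(i-1,j)+c_{m,n-1,k}(i,j-1)$. (4) If $0\le k\le\min(m,n)-1$ and $i+j>k$: $c_{m,n,k}(i,j)=c_{m+1,n,k+1}(i,j)-c_{m,n+1,k+1}(i,j)$.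
   Context: Binomial coefficients $\binom{a}{b}$ equal $\frac{a!}{b!(a-b)!}$ when $0\le b\le a$ and $0$ otherwise. For integers $m,n\ge0$, $0\le k\le\min(m,n)$ and arbitrary integers $i,j$, define $c_{m,n,k}(i,j)=\sum_{l=0}^{k}(-1)^l\binom{i+j-k}{i-l}\binom{m-l}{k-l}\binom{n-k+l}{l}$ if $i+j\ge k$, and $c_{m,n,k}(i,j)=0$ if $i+j<k$. Equivalently, for $i+j\ge k$, $c_{m,n,k}(i,j)$ is the coefficient of $x^jy^i$ in $(x+y)^{i+j-k}(1-x)^{-(m-k+1)}(1+y)^{-(n-k+1)}$. (For $0\le i\le m$, $0\le j\le n$, $k\le i+j\le m+n-k$, this is the coordinate of $f^i\phi_m\otimes f^j\phi_n$ in the weight vector $f^{i+j-k}\phi_{m,n,k}$ of the copy of $V(m+n-2k)$ in $V(m)\otimes V(n)$ generated by the highest weight vector $\phi_{m,n,k}=\sum_{l=0}^{k}(-1)^l\binom{m-l}{k-l}\binom{n-k+l}{l} f^l\phi_m\otimes f^{k-l}\phi_n$.) *)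

(* Defs.v *)
From HB Require Import structures.
From mathcomp Require Import all_boot all_order all_algebra.
Set Implicit Arguments. Unset Strict Implicit. Unset Printing Implicit Defensive.
Import Order.TTheory GRing.Theory Num.Theory.
Local Open Scope ring_scope.

Definition binomZ (a b : int) : int :=
  if (0 <= b) && (b <= a) then ('C(`|a|%N, `|b|%N))%:Z else 0.

Definition cmnk (m n k : nat) (i j : int) : int :=
  if (k%:Z <= i + j) then
    \sum_(l < k.+1)
      (-1) ^+ l * binomZ (i + j - k%:Z) (i - l%:Z)
                * binomZ (m%:Z - l%:Z) (k%:Z - l%:Z)
                * binomZ (n%:Z - k%:Z + l%:Z) l%:Z
  else 0.

(* Main.v *)
Require Import Defs.
From HB Require Import structures.
From mathcomp Require Import all_boot all_order all_algebra.
From mathcomp Require Import zify ring.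
Import Order.TTheory GRing.Theory Num.Theory.
Local Open Scope ring_scope.

Lemma binomZ_neg a b : b < 0 -> binomZ a b = 0.
Proof. move=> hb; rewrite /binomZ; case: ifP => //; lia. Qed.

Lemma binomZ_nat (p q : nat) : binomZ p q = ('C(p, q))%:Z.
Proof.
rewrite /binomZ /=; case: ifP => // /negbT => h; have {h} : (p < q)%N by lia.
by move=> h; rewrite bin_small.
Qed.

Lemma pascalZ a b : 0 < a -> binomZ a b = binomZ (a-1) b + binomZ (a-1) (b-1).
Proof.
case: a => [[|p]|p] // _.
case: b => [[|q]|q].
- rewrite (@binomZ_neg _ (0 - 1)) // addr0.
  have -> : (Posz p.+1 - 1) = Posz p by lia.
  by rewrite !binomZ_nat !bin0.
- have -> : (Posz p.+1 - 1) = Posz p by lia.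
  have -> : (Posz q.+1 - 1) = Posz q by lia.
  by rewrite !binomZ_nat binS PoszD.
- rewrite !binomZ_neg //; lia.
Qed.

Definition t (m n k s i : int) (l : nat) : int :=
  (-1) ^+ l * binomZ (s - k) (i - l%:Z) * binomZ (m - l%:Z) (k - l%:Z)
            * binomZ (n - k + l%:Z) l%:Z.

Lemma cmnkE m n k i j : cmnk m n k i j =
  if k%:Z <= i + j then \sum_(l < k.+1) t m n k (i + j) i l else 0.
Proof. by []. Qed.
Lemma core1 (m n k : nat) s i : (k.+1 <= m)%N ->
 \sum_(l<k.+2) t m.+1 n.+1 k.+1 s i l =
 \sum_(l<k.+2) t m n.+1 k.+1 s i l + \sum_(l<k.+1) t m n k (s-1) i l.
Proof.
move=> hk.
rewrite (eq_bigr (fun l : 'I_k.+2 => t m n.+1 k.+1 s i l +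
   (-1)^+l * binomZ (s - k.+1%:Z) (i - l%:Z) * binomZ (m%:Z - l%:Z) (k%:Z - l%:Z)
     * binomZ (n.+1%:Z - k.+1%:Z + l%:Z) l%:Z)).
  rewrite big_split /=; congr (_ + _).
  rewrite big_ord_recr /= (@binomZ_neg _ (k%:Z - k.+1%:Z)); last lia.
  rewrite mulr0 mul0r addr0; apply: eq_bigr => l _; rewrite /t.
  have hl := ltn_ord l.
  congr (_ * _ * _ * _); congr binomZ; lia.
move=> l _; rewrite /t.
have hl := ltn_ord l.
rewrite (@pascalZ (m.+1%:Z - l%:Z)); last lia.
have -> : m.+1%:Z - l%:Z - 1 = m%:Z - l%:Z by lia.
have -> : k.+1%:Z - l%:Z - 1 = k%:Z - l%:Z by lia.
ring.
Qed.
Lemma core2 (m n k : nat) s i : (k.+1 <= n)%N ->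
 \sum_(l<k.+2) t m.+1 n.+1 k.+1 s i l =
 \sum_(l<k.+2) t m.+1 n k.+1 s i l - \sum_(l<k.+1) t m n k (s-1) (i-1) l.
Proof.
move=> hk.
rewrite (eq_bigr (fun l : 'I_k.+2 => t m.+1 n k.+1 s i l +
   (-1)^+l * binomZ (s - k.+1%:Z) (i - l%:Z) * binomZ (m.+1%:Z - l%:Z) (k.+1%:Z - l%:Z)
     * binomZ (n%:Z - k.+1%:Z + l%:Z) (l%:Z - 1))).
  rewrite big_split /=; congr (_ + _).
  rewrite big_ord_recl /= (@binomZ_neg _ (0%:Z - 1)); last lia.
  rewrite mulr0 add0r -sumrN; apply: eq_bigr => l _; rewrite /t.
  have hl := ltn_ord l.
  rewrite /bump leq0n add1n exprS.
  have e1 : binomZ (s - k.+1%:Z) (i - l.+1%:Z) = binomZ (s - 1 - k%:Z) (i - 1 - l%:Z) by congr binomZ; lia.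
  have e2 : binomZ (m.+1%:Z - l.+1%:Z) (k.+1%:Z - l.+1%:Z) = binomZ (m%:Z - l%:Z) (k%:Z - l%:Z) by congr binomZ; lia.
  have e3 : binomZ (n%:Z - k.+1%:Z + l.+1%:Z) (l.+1%:Z - 1) = binomZ (n%:Z - k%:Z + l%:Z) l%:Z by congr binomZ; lia.
  rewrite e1 e2 e3; ring.
move=> l _; rewrite /t.
have hl := ltn_ord l.
rewrite (@pascalZ (n.+1%:Z - k.+1%:Z + l%:Z)); last lia.
have -> : n.+1%:Z - k.+1%:Z + l%:Z - 1 = n%:Z - k.+1%:Z + l%:Z by lia.
ring.
Qed.
Lemma core3 (m n k : nat) s i : (k <= m)%N -> (k <= n)%N -> k%:Z < s ->
 \sum_(l<k.+1) t m.+1 n.+1 k s i l =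
 \sum_(l<k.+1) t m n.+1 k (s-1) (i-1) l + \sum_(l<k.+1) t m.+1 n k (s-1) i l.
Proof.
move=> hm hn hs.
pose P (l : nat) := (-1)^+l * binomZ (s - 1 - k%:Z) (i - 1 - l%:Z) * binomZ (m%:Z - l%:Z) (k%:Z - l%:Z - 1)
     * binomZ (n.+1%:Z - k%:Z + l%:Z) l%:Z.
pose Q (l : nat) := (-1)^+l * binomZ (s - 1 - k%:Z) (i - l%:Z) * binomZ (m.+1%:Z - l%:Z) (k%:Z - l%:Z)
     * binomZ (n.+1%:Z - k%:Z + l%:Z - 1) (l%:Z - 1).
rewrite (eq_bigr (fun l : 'I_k.+1 => (t m n.+1 k (s-1) (i-1) l + t m.+1 n k (s-1) i l) + (P l + Q l))).
  rewrite big_split /=.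
  suff -> : \sum_(l < k.+1) (P l + Q l) = 0 by rewrite addr0 big_split.
  rewrite big_split /=.
  rewrite big_ord_recr /= {2}/P (@binomZ_neg _ (k%:Z - k%:Z - 1)); last lia.
  rewrite mulr0 mul0r addr0.
  rewrite big_ord_recl /=.
  have -> : Q 0%N = 0 by rewrite /Q (@binomZ_neg _ (0%:Z - 1)) ?mulr0 //; lia.
  rewrite add0r -big_split /=; apply: big1 => l _.
  rewrite /P /Q /bump leq0n add1n exprS.
  have hl := ltn_ord l.
  have e1 : binomZ (s - 1 - k%:Z) (i - l.+1%:Z) = binomZ (s - 1 - k%:Z) (i - 1 - l%:Z) by congr binomZ; lia.
  have e2 : binomZ (m.+1%:Z - l.+1%:Z) (k%:Z - l.+1%:Z) = binomZ (m%:Z - l%:Z) (k%:Z - l%:Z - 1) by congr binomZ; lia.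
  have e3 : binomZ (n.+1%:Z - k%:Z + l.+1%:Z - 1) (l.+1%:Z - 1) = binomZ (n.+1%:Z - k%:Z + l%:Z) l%:Z by congr binomZ; lia.
  rewrite e1 e2 e3; ring.
move=> l _; rewrite /t /P /Q.
have hl := ltn_ord l.
rewrite (@pascalZ (s - k%:Z)); last lia.
rewrite (@pascalZ (m.+1%:Z - l%:Z)); last lia.
rewrite (@pascalZ (n.+1%:Z - k%:Z + l%:Z)); last lia.
have -> : s - k%:Z - 1 = s - 1 - k%:Z by lia.
have -> : i - l%:Z - 1 = i - 1 - l%:Z by lia.
have -> : m.+1%:Z - l%:Z - 1 = m%:Z - l%:Z by lia.
have -> : n.+1%:Z - k%:Z + l%:Z - 1 = n%:Z - k%:Z + l%:Z by lia.
ring.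
Qed.
Lemma core4 (m n k : nat) s i : (k.+1 <= m)%N -> (k.+1 <= n)%N -> k%:Z < s ->
 \sum_(l<k.+1) t m n k s i l =
 \sum_(l<k.+2) t m.+1 n k.+1 s i l - \sum_(l<k.+2) t m n.+1 k.+1 s i l.
Proof.
move=> hm hn hs.
pose W (l : nat) := (-1)^+l * binomZ (s - k.+1%:Z) (i - l%:Z) * binomZ (m%:Z - l%:Z) (k%:Z - l%:Z)
     * binomZ (n.+1%:Z - k.+1%:Z + l%:Z) l%:Z.
pose V (l : nat) := (-1)^+l * binomZ (s - k.+1%:Z) (i - l%:Z) * binomZ (m.+1%:Z - l%:Z) (k.+1%:Z - l%:Z)
     * binomZ (n%:Z - k.+1%:Z + l%:Z) (l%:Z - 1).
rewrite -sumrB (eq_bigr (fun l : 'I_k.+2 => W l - V l)); last first.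
  move=> l _; rewrite /t /W /V.
  have hl := ltn_ord l.
  rewrite (@pascalZ (m.+1%:Z - l%:Z)); last lia.
  rewrite (@pascalZ (n.+1%:Z - k.+1%:Z + l%:Z)); last lia.
  have -> : m.+1%:Z - l%:Z - 1 = m%:Z - l%:Z by lia.
  have -> : k.+1%:Z - l%:Z - 1 = k%:Z - l%:Z by lia.
  have -> : n.+1%:Z - k.+1%:Z + l%:Z - 1 = n%:Z - k.+1%:Z + l%:Z by lia.
  ring.
rewrite sumrB [\sum_(_ < k.+2) W _]big_ord_recr /=.
have -> : W k.+1 = 0 by rewrite /W (@binomZ_neg _ (k%:Z - k.+1%:Z)) ?mulr0 ?mul0r //; lia.
rewrite addr0 [\sum_(_ < k.+2) V _]big_ord_recl /=.
have -> : V 0%N = 0 by rewrite /V (@binomZ_neg _ (0%:Z - 1)) ?mulr0 //; lia.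
rewrite add0r -sumrB; apply: eq_bigr => l _.
rewrite /t /W /V /bump leq0n add1n exprS.
have hl := ltn_ord l.
rewrite (@pascalZ (s - k%:Z)); last lia.
have -> : s - k%:Z - 1 = s - k.+1%:Z by lia.
have e1 : binomZ (s - k.+1%:Z) (i - l.+1%:Z) = binomZ (s - k.+1%:Z) (i - l%:Z - 1) by congr binomZ; lia.
have e2 : binomZ (m.+1%:Z - l.+1%:Z) (k.+1%:Z - l.+1%:Z) = binomZ (m%:Z - l%:Z) (k%:Z - l%:Z) by congr binomZ; lia.
have e3 : binomZ (n%:Z - k.+1%:Z + l.+1%:Z) (l.+1%:Z - 1) = binomZ (n%:Z - k%:Z + l%:Z) l%:Z by congr binomZ; lia.
have e4 : binomZ (n.+1%:Z - k.+1%:Z + l%:Z) l%:Z = binomZ (n%:Z - k%:Z + l%:Z) l%:Z by congr binomZ; lia.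
rewrite e1 e2 e3 e4; ring.
Qed.

Theorem proposition7p3 (i j : int) :
  (forall m n k : nat, (1 <= k)%N -> (k <= m - 1)%N -> (k <= n)%N ->
     cmnk m n k i j = cmnk (m - 1) n k i j + cmnk (m - 1) (n - 1) (k - 1) i (j - 1))
  /\
  (forall m n k : nat, (1 <= k)%N -> (k <= m)%N -> (k <= n - 1)%N ->
     cmnk m n k i j = cmnk m (n - 1) k i j - cmnk (m - 1) (n - 1) (k - 1) (i - 1) j)
  /\
  (forall m n k : nat, (k <= minn (m - 1) (n - 1))%N -> (1 <= minn m n)%N ->
     k%:Z < i + j ->
     cmnk m n k i j = cmnk (m - 1) n k (i - 1) j + cmnk m (n - 1) k i (j - 1))
  /\
  (forall m n k : nat, (k <= minn m n - 1)%N -> (1 <= minn m n)%N ->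
     k%:Z < i + j ->
     cmnk m n k i j = cmnk m.+1 n k.+1 i j - cmnk m n.+1 k.+1 i j).
Proof.
split; [|split; [|split]].
- move=> [|m] [|n] [|k] //= h1 h2 h3; try lia.
  rewrite !subn1 /= in h2 *.
  rewrite !cmnkE.
  case: (boolP (k.+1%:Z <= i + j)) => h.
    have h' : (k%:Z <= i + (j - 1)) by lia.
    rewrite h' (_ : i + (j - 1) = i + j - 1); last by ring.
    exact: core1.
  rewrite (_ : (k%:Z <= i + (j - 1)) = false) ?addr0 //.
  by apply/negbTE; lia.
- move=> [|m] [|n] [|k] //= h1 h2 h3; try lia.
  rewrite !subn1 /= in h3 *.
  rewrite !cmnkE.
  case: (boolP (k.+1%:Z <= i + j)) => h.
    have h' : (k%:Z <= i - 1 + j) by lia.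
    rewrite h' (_ : i - 1 + j = i + j - 1); last by ring.
    exact: core2.
  rewrite (_ : (k%:Z <= i - 1 + j) = false) ?subr0 //.
  by apply/negbTE; lia.
- move=> [|m] [|n] k h1 h2 h3; try lia.
  rewrite !subn1 /= in h1 *.
  rewrite !cmnkE.
  have c1 : (k%:Z <= i + j) by lia.
  have c2 : (k%:Z <= i - 1 + j) by lia.
  have c3 : (k%:Z <= i + (j - 1)) by lia.
  rewrite c1 c2 c3 (_ : i - 1 + j = i + j - 1); last by ring.
  rewrite (_ : i + (j - 1) = i + j - 1); last by ring.
  apply: core3; lia.
- move=> m n k h1 h2 h3.
  rewrite !cmnkE.
  have c1 : (k%:Z <= i + j) by lia.
  have c2 : (k.+1%:Z <= i + j) by lia.
  rewrite c1 c2.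
  apply: core4; lia.
Qed.
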